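(* Let $l\geq 1$ and $m\geq 1$ be integers. Then for each of the following five choices of $(d_1,d_2,\beta)$ there is a constant $C>0$ such that for all distribution functions $F$ and $G$ of probability distributions supported on $\mathbb{Z}$, \[ d_1(\bar F^m,\bar G^m)\leq C\, d_2(F,G)^{1-\beta}\,\bigl(\|\Delta^{l+1}\bar F^m\|_1+\|\Delta^{l+1}\bar G^m\|_1\bigr)^{\beta}: \] (i) $d_1=d_{\mathrm{loc}}$, $d_2=d_{\mathrm{TV}}$, $\beta=1/l$; (ii) $d_1=d_{\mathrm{loc}}$, $d_2=d_{\mathrm{K}}$, $\beta=1/l$; (iii) $d_1=d_{\mathrm{loc}}$, $d_2=d_{\mathrm{W}}$, $\beta=2/(l+1)$; (iv) $d_1=d_{\mathrm{TV}}$, $d_2=d_{\mathrm{W}}$, $\beta=1/(l+1)$; (v) $d_1=d_{\mathrm{K}}$, $d_2=d_{\mathrm{W}}$, $\beta=1/(l+1)$.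
   Context: For $f:\mathbb{Z}\to\mathbb{R}$, $\|f\|_p=(\sum_{i\in\mathbb{Z}}|f(i)|^p)^{1/p}$ for $1\le p<\infty$ and $\|f\|_\infty=\sup_{i\in\mathbb{Z}}|f(i)|$. Difference operators: $\Delta^0 f(k)=f(k)$, $\Delta^{n+1}f(k)=\Delta^n f(k+1)-\Delta^n f(k)$; write $\Delta=\Delta^1$. The distribution function of an integer-supported distribution is $F(j)=\mathbb{P}[X\le j]$, $j\in\mathbb{Z}$. For a positive integer $m$, $\bar F^m(j)=\frac{F(j)+F(j-1)+\dots+F(j-m+1)}{m}$ (so $\bar F^1=F$). For functions $F,G$ on $\mathbb{Z}$: $d_{\mathrm{K}}(F,G)=\|F-G\|_\infty$, $d_{\mathrm{W}}(F,G)=\|F-G\|_1$, $d_{\mathrm{loc}}(F,G)=\|\Delta F-\Delta G\|_\infty$, $d_{\mathrm{TV}}(F,G)=\frac12\|\Delta F-\Delta G\|_1$. *)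

(* Defs.v *)
From HB Require Import structures.
From mathcomp Require Import all_boot all_order all_algebra.
From mathcomp Require Import all_classical all_reals all_analysis.
Set Implicit Arguments. Unset Strict Implicit. Unset Printing Implicit Defensive.
Import Order.TTheory GRing.Theory Num.Theory.
Local Open Scope classical_set_scope.
Local Open Scope ring_scope.

Section Defs.
Variable R : realType.

Definition norm1 (f : int -> R) : \bar R :=
  (\esum_(i in [set: int]) (`|f i|)%:E)%E.

Definition normInf (f : int -> R) : \bar R :=
  ereal_sup [set (`|f i|)%:E | i in [set: int]].

Definition Delta (f : int -> R) : int -> R := fun k => f (k + 1) - f k.
Definition DeltaN (n : nat) (f : int -> R) : int -> R := iter n Delta f.

Definition is_distr_fun (F : int -> R) : Prop :=
  exists p : int -> R,
    (forall i, 0 <= p i) /\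
    (\esum_(i in [set: int]) (p i)%:E = 1)%E /\
    (forall j, (F j)%:E = \esum_(i in [set i | (i <= j)%R]) (p i)%:E)%E.

Definition barF (m : nat) (F : int -> R) : int -> R :=
  fun j => (\sum_(i < m) F (j - (i : nat)%:Z)) / m%:R.

Definition dK (F G : int -> R) : \bar R := normInf (fun j => F j - G j).
Definition dW (F G : int -> R) : \bar R := norm1 (fun j => F j - G j).
Definition dloc (F G : int -> R) : \bar R :=
  normInf (fun j => Delta F j - Delta G j).
Definition dTV (F G : int -> R) : \bar R :=
  ((2^-1)%:E * norm1 (fun j => (Delta F j - Delta G j)%R))%E.

Definition smoothing_bound (d1 d2 : (int -> R) -> (int -> R) -> \bar R)
  (beta : R) (l m : nat) : Prop :=
  exists C : R, 0 < C /\
    forall F G : int -> R, is_distr_fun F -> is_distr_fun G ->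
      (d1 (barF m F) (barF m G) <=
        C%:E * poweR (d2 F G) (1 - beta)%R *
        poweR (norm1 (DeltaN l.+1 (barF m F)) + norm1 (DeltaN l.+1 (barF m G)))
              beta)%E.
End Defs.

(* Main.v *)
Require Import Defs.
From HB Require Import structures.
From mathcomp Require Import all_boot all_order all_algebra ring lra zify.
From mathcomp Require Import all_classical all_reals all_analysis.
Set Implicit Arguments. Unset Strict Implicit. Unset Printing Implicit Defensive.
Import Order.TTheory GRing.Theory Num.Theory.
Local Open Scope ring_scope.
Section Act.
Context {R : realFieldType}.
Implicit Types (p q : {poly R}) (f g : int -> R).

Definition act p f : int -> R :=
  fun j => \sum_(i < size p) p`_i * f (j + (i:nat)%:Z).

Lemma act_wide p f j N : (size p <= N)%N ->
  act p f j = \sum_(i < N) p`_i * f (j + (i:nat)%:Z).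
Proof.
move=> hN; rewrite /act (big_ord_widen _ (fun i => p`_i * f (j + i%:Z)) hN).
rewrite [RHS](bigID (fun i : 'I_N => (i < size p)%N)) /=.
rewrite [X in _ = _ + X]big1 ?addr0 // => i; rewrite -leqNgt => hi.
by rewrite nth_default // mul0r.
Qed.

Lemma act_ext p f g j : (forall k, f k = g k) -> act p f j = act p g j.
Proof. by move=> e; apply: eq_bigr => i _; rewrite e. Qed.

Lemma act_shift p f j k : act p (fun i => f (i + k)) j = act p f (j + k).
Proof. by apply: eq_bigr => i _; rewrite addrAC. Qed.

Lemma act0 f j : act 0 f j = 0.
Proof. by rewrite /act size_poly0 big_ord0. Qed.

Lemma actD p q f j : act (p + q) f j = act p f j + act q f j.
Proof.
pose N := maxn (size p) (size q).
rewrite (@act_wide (p + q) f j N) ?(@act_wide p f j N) ?(@act_wide q f j N)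
  ?leq_maxl ?leq_maxr //; last first.
  by apply: leq_trans (size_polyD _ _) _.
by rewrite -big_split /=; apply: eq_bigr => i _; rewrite coefD mulrDl.
Qed.

Lemma actC c f j : act c%:P f j = c * f j.
Proof.
rewrite (@act_wide _ _ _ 1) ?size_polyC ?leq_b1 // big_ord1 coefC /=.
by rewrite addr0.
Qed.

Lemma actCM c p f j : act (c%:P * p) f j = c * act p f j.
Proof.
have [->|c0] := eqVneq c 0; first by rewrite mul0r act0 mul0r.
rewrite /act size_Cmul // mulr_sumr; apply: eq_bigr => i _; by rewrite coefCM mulrA.
Qed.

Lemma actXM p f j : act ('X * p) f j = act p f (j + 1).
Proof.
have [->|p0] := eqVneq p 0; first by rewrite mulr0 !act0.
rewrite /act mulrC size_mulX // -mulrC.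
rewrite big_ord_recl coefXM /= mul0r add0r; apply: eq_bigr => i _.
rewrite coefXM /=; congr (_ * f _).
by rewrite /bump /= add1n -addn1 PoszD addrA [X in _ = X](addrAC j).
Qed.

Lemma actM p q f j : act (p * q) f j = act p (act q f) j.
Proof.
elim/poly_ind: p q f j => [|p c IH] q f j.
  by rewrite mul0r !act0.
rewrite mulrDl actD actD actCM actC -mulrA IH.
congr (_ + _); rewrite [p * 'X]mulrC actXM.
rewrite (act_ext _ (g := fun k => act q f (k + 1))); last by move=> k; rewrite actXM.
by rewrite (act_shift p (act q f) j 1).
Qed.

Lemma actN p f j : act (- p) f j = - act p f j.
Proof. by rewrite -mulN1r -polyCN actCM mulN1r. Qed.

Lemma actB p q f j : act (p - q) f j = act p f j - act q f j.
Proof. by rewrite actD actN. Qed.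

Lemma act1 f j : act 1 f j = f j.
Proof. by rewrite -polyC1 actC mul1r. Qed.

Lemma actX f j : act 'X f j = f (j + 1).
Proof. by rewrite -[X in act X]mulr1 actXM act1. Qed.

Lemma actXn n f j : act ('X^n) f j = f (j + n%:Z).
Proof.
elim: n j => [|n IH] j; first by rewrite expr0 act1 addr0.
by rewrite exprS actXM IH -addrA -PoszD add1n.
Qed.

Lemma act_sum I (r : seq I) (P : pred I) (F : I -> {poly R}) f j :
  act (\sum_(i <- r | P i) F i) f j = \sum_(i <- r | P i) act (F i) f j.
Proof.
elim/big_rec2: _ => [|i y p _ <-]; first by rewrite act0.
by rewrite actD.
Qed.

Lemma act_fB p f g j : act p (fun k => f k - g k) j = act p f j - act p g j.
Proof. by rewrite /act -sumrB; apply: eq_bigr => i _; rewrite mulrBr. Qed.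


Lemma act_sign n p f j : act ((-1) ^+ n * p) f j = (-1) ^+ n * act p f j.
Proof.
elim: n => [|n IH]; first by rewrite !expr0 !mul1r.
by rewrite exprS -mulrA mulN1r actN IH exprS mulN1r mulNr.
Qed.

End Act.
Section Bounds.
Context {R : realFieldType}.
Implicit Types (p q : {poly R}) (f g : int -> R).

Definition Sup f (b : R) := forall j, `|f j| <= b.
Definition W1 f (b : R) := forall (a : int) (n : nat),
  \sum_(t < n) `|f (a + (t:nat)%:Z)| <= b.

Definition SupB p c := forall f b, Sup f b -> Sup (act p f) (c * b).
Definition W1B p c := forall f b, W1 f b -> W1 (act p f) (c * b).
Definition LSB p c := forall f b, W1 f b -> Sup (act p f) (c * b).

Lemma Sup_ge0 f b : Sup f b -> 0 <= b.
Proof. by move=> h; apply: le_trans (h 0). Qed.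

Lemma W1_ge0 f b : W1 f b -> 0 <= b.
Proof. by move=> h; apply: le_trans (h 0 0%N); rewrite big_ord0. Qed.

Lemma W1_Sup f b : W1 f b -> Sup f b.
Proof. by move=> h j; have := h j 1%N; rewrite big_ord1 addr0. Qed.

Lemma Sup_le f b b' : Sup f b -> b <= b' -> Sup f b'.
Proof. by move=> h hb j; apply: le_trans (h j) hb. Qed.

Lemma W1_le f b b' : W1 f b -> b <= b' -> W1 f b'.
Proof. by move=> h hb a n; apply: le_trans (h a n) hb. Qed.

Lemma Sup_ext f g b : (forall j, f j = g j) -> Sup f b -> Sup g b.
Proof. by move=> e h j; rewrite -e. Qed.

Lemma W1_ext f g b : (forall j, f j = g j) -> W1 f b -> W1 g b.
Proof. by move=> e h a n; under eq_bigr do rewrite -e; exact: h. Qed.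

Lemma SupB_le p c c' : SupB p c -> c <= c' -> SupB p c'.
Proof.
move=> h hc f b hf; apply: Sup_le (h f b hf) _.
by apply: ler_wpM2r => //; exact: Sup_ge0 hf.
Qed.

Lemma W1B_le p c c' : W1B p c -> c <= c' -> W1B p c'.
Proof.
move=> h hc f b hf; apply: W1_le (h f b hf) _.
by apply: ler_wpM2r => //; exact: W1_ge0 hf.
Qed.

Lemma LSB_le p c c' : LSB p c -> c <= c' -> LSB p c'.
Proof.
move=> h hc f b hf; apply: Sup_le (h f b hf) _.
by apply: ler_wpM2r => //; exact: W1_ge0 hf.
Qed.

Lemma SupB_M p q c1 c2 : SupB p c1 -> SupB q c2 -> SupB (p * q) (c1 * c2).
Proof.
move=> hp hq f b hf; apply: (Sup_ext (fun j => esym (actM p q f j))).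
by rewrite -mulrA; apply: hp; apply: hq.
Qed.

Lemma W1B_M p q c1 c2 : W1B p c1 -> W1B q c2 -> W1B (p * q) (c1 * c2).
Proof.
move=> hp hq f b hf; apply: (W1_ext (fun j => esym (actM p q f j))).
by rewrite -mulrA; apply: hp; apply: hq.
Qed.

Lemma LSB_M p q c1 c2 : LSB p c1 -> W1B q c2 -> LSB (p * q) (c1 * c2).
Proof.
move=> hp hq f b hf; apply: (Sup_ext (fun j => esym (actM p q f j))).
by rewrite -mulrA; apply: hp; apply: hq.
Qed.

Lemma SupB_D p q c1 c2 : SupB p c1 -> SupB q c2 -> SupB (p + q) (c1 + c2).
Proof.
move=> hp hq f b hf j; rewrite actD mulrDl.
by apply: le_trans (ler_normD _ _) _; apply: lerD; [apply: hp|apply: hq].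
Qed.

Lemma W1B_D p q c1 c2 : W1B p c1 -> W1B q c2 -> W1B (p + q) (c1 + c2).
Proof.
move=> hp hq f b hf a n; rewrite mulrDl.
apply: le_trans (_ : \sum_(t < n) (`|act p f (a + t%:Z)| + `|act q f (a + t%:Z)|) <= _).
  by apply: ler_sum => t _; rewrite actD ler_normD.
by rewrite big_split /=; apply: lerD; [apply: hp|apply: hq].
Qed.

Lemma SupB_N p c : SupB p c -> SupB (- p) c.
Proof. by move=> h f b hf j; rewrite actN normrN; apply: h. Qed.

Lemma W1B_N p c : W1B p c -> W1B (- p) c.
Proof. by move=> h f b hf a n; under eq_bigr do rewrite actN normrN; apply: h. Qed.

Lemma SupB_C c : SupB c%:P `|c|.
Proof. by move=> f b hf j; rewrite actC normrM ler_wpM2l. Qed.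

Lemma W1B_C c : W1B c%:P `|c|.
Proof.
move=> f b hf a n; under eq_bigr do rewrite actC normrM.
by rewrite -mulr_sumr ler_wpM2l.
Qed.

Lemma SupB_CM c p k : SupB p k -> SupB (c%:P * p) (`|c| * k).
Proof. by move=> h; apply: SupB_M => //; apply: SupB_C. Qed.

Lemma W1B_CM c p k : W1B p k -> W1B (c%:P * p) (`|c| * k).
Proof. by move=> h; apply: W1B_M => //; apply: W1B_C. Qed.

Lemma SupB_1 : SupB 1 1.
Proof. by have := SupB_C 1; rewrite polyC1 normr1. Qed.

Lemma W1B_1 : W1B 1 1.
Proof. by have := W1B_C 1; rewrite polyC1 normr1. Qed.

Lemma SupB_Xn n : SupB 'X^n 1.
Proof. by move=> f b hf j; rewrite actXn mul1r. Qed.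

Lemma W1B_Xn n : W1B 'X^n 1.
Proof.
move=> f b hf a k; under eq_bigr do rewrite actXn addrAC.
by rewrite mul1r; apply: hf.
Qed.

Lemma SupB_X : SupB 'X 1.
Proof. by have := SupB_Xn 1; rewrite expr1. Qed.

Lemma W1B_X : W1B 'X 1.
Proof. by have := W1B_Xn 1; rewrite expr1. Qed.

Lemma SupB_exp p c n : SupB p c -> SupB (p ^+ n) (c ^+ n).
Proof.
move=> h; elim: n => [|n IH]; first by rewrite !expr0; apply: SupB_1.
by rewrite !exprS; apply: SupB_M.
Qed.

Lemma W1B_exp p c n : W1B p c -> W1B (p ^+ n) (c ^+ n).
Proof.
move=> h; elim: n => [|n IH]; first by rewrite !expr0; apply: W1B_1.
by rewrite !exprS; apply: W1B_M.
Qed.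

Lemma SupB_sum n (F : nat -> {poly R}) c :
  (forall i, (i < n)%N -> SupB (F i) c) -> SupB (\sum_(i < n) F i) (n%:R * c).
Proof.
elim: n => [|n IH] h.
  by rewrite big_ord0 mul0r => f b hf j; rewrite act0 normr0 mul0r.
rewrite big_ord_recr /= -addn1 natrD mulrDl mul1r; apply: SupB_D.
  by apply: IH => i hi; apply: h; rewrite ltnS ltnW.
by apply: h.
Qed.

Lemma W1B_sum n (F : nat -> {poly R}) c :
  (forall i, (i < n)%N -> W1B (F i) c) -> W1B (\sum_(i < n) F i) (n%:R * c).
Proof.
elim: n => [|n IH] h.
  rewrite big_ord0 mul0r => f b hf a k; rewrite mul0r.
  by rewrite big1 // => t _; rewrite act0 normr0.
rewrite big_ord_recr /= -addn1 natrD mulrDl mul1r; apply: W1B_D.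
  by apply: IH => i hi; apply: h; rewrite ltnS ltnW.
by apply: h.
Qed.

Lemma SupB_sign n p c : SupB p c -> SupB ((-1) ^+ n * p) c.
Proof.
move=> h f b hf j; rewrite act_sign normrM normrX normrN1 expr1n mul1r.
by apply: h.
Qed.

Lemma LSB_sign n p c : LSB p c -> LSB ((-1) ^+ n * p) c.
Proof.
move=> h f b hf j; rewrite act_sign normrM normrX normrN1 expr1n mul1r.
by apply: h.
Qed.

Lemma W1B_sign n p c : W1B p c -> W1B ((-1) ^+ n * p) c.
Proof.
move=> h f b hf a k.
under eq_bigr do rewrite act_sign normrM normrX normrN1 expr1n mul1r.
by apply: h.
Qed.

Lemma SupB_act p c f b : SupB p c -> Sup f b -> Sup (act p f) (c * b).
Proof. by move=> h; apply: h. Qed.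

End Bounds.
Section Ops.
Variable R : realFieldType.
Variable s : nat.
Hypothesis hs : (0 < s)%N.
Implicit Types (p q : {poly R}) (f g : int -> R).

Definition D1 : {poly R} := 'X - 1.
Definition Mp : {poly R} := (s%:R^-1)%:P * \sum_(i < s) 'X^i.
Definition Qp : {poly R} := (s%:R^-1)%:P * \sum_(i < s) \sum_(r < i) 'X^r.

Lemma s_neq0 : (s%:R : R) != 0.
Proof. by rewrite pnatr_eq0 -lt0n. Qed.
Lemma s_gt0 : (0 : R) < s%:R.
Proof. by rewrite ltr0n. Qed.
Lemma sinv_ge0 : (0 : R) <= s%:R^-1.
Proof. by rewrite invr_ge0 ler0n. Qed.
Lemma norm_sinv : `|(s%:R : R)^-1| = s%:R^-1.
Proof. by rewrite ger0_norm // sinv_ge0. Qed.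

Lemma SupB_D1 : SupB D1 2.
Proof. by have := SupB_D SupB_X (SupB_N SupB_1). Qed.
Lemma W1B_D1 : W1B D1 2.
Proof. by have := W1B_D W1B_X (W1B_N W1B_1). Qed.

Lemma SupB_Mp : SupB Mp 1.
Proof.
apply: (SupB_le (SupB_CM _ (@SupB_sum _ s (fun i => 'X^i) 1 (fun i _ => SupB_Xn i)))).
by rewrite norm_sinv mulr1 mulVf // s_neq0.
Qed.
Lemma W1B_Mp : W1B Mp 1.
Proof.
apply: (W1B_le (W1B_CM _ (@W1B_sum _ s (fun i => 'X^i) 1 (fun i _ => W1B_Xn i)))).
by rewrite norm_sinv mulr1 mulVf // s_neq0.
Qed.

Lemma W1B_Qp : W1B Qp s%:R.
Proof.
have h : W1B (\sum_(i < s) \sum_(r < i) 'X^r : {poly R}) (s%:R * s%:R).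
  refine (@W1B_sum R s (fun i : nat => \sum_(r < i) 'X^r) s%:R _) => i hi.
  apply: W1B_le (@W1B_sum R i (fun r => 'X^r) 1 (fun r _ => W1B_Xn r)) _.
  by rewrite mulr1 ler_nat ltnW.
apply: W1B_le (W1B_CM _ h) _.
by rewrite norm_sinv mulrA mulVf ?s_neq0 // mul1r.
Qed.

Lemma act_Mp f j : act Mp f j = s%:R^-1 * \sum_(i < s) f (j + (i:nat)%:Z).
Proof. by rewrite /Mp actCM act_sum; congr (_ * _); apply: eq_bigr => i _; rewrite actXn. Qed.

Lemma act_Qp f j : act Qp f j =
  s%:R^-1 * \sum_(i < s) \sum_(r < i) f (j + (r:nat)%:Z).
Proof.
rewrite /Qp actCM act_sum; congr (_ * _); apply: eq_bigr => i _.
by rewrite act_sum; apply: eq_bigr => r _; rewrite actXn.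
Qed.

Lemma LSB_Mp : LSB Mp s%:R^-1.
Proof.
move=> f b hf j; rewrite act_Mp normrM norm_sinv ler_wpM2l ?sinv_ge0 //.
by apply: le_trans (ler_norm_sum _ _ _) _; apply: hf.
Qed.

Lemma LSB_Qp : LSB Qp 1.
Proof.
move=> f b hf j; rewrite act_Qp normrM norm_sinv.
apply: le_trans (_ : s%:R^-1 * \sum_(i < s) b <= _).
  rewrite ler_wpM2l ?sinv_ge0 //.
  apply: le_trans (ler_norm_sum _ _ _) _; apply: ler_sum => i _.
  by apply: le_trans (ler_norm_sum _ _ _) _; apply: hf.
by rewrite sumr_const card_ord mul1r -[b *+ s]mulr_natl mulrA mulVf ?s_neq0 // mul1r.
Qed.

Lemma D1Mp : D1 * Mp = (s%:R^-1)%:P * ('X^s - 1).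
Proof. by rewrite /D1 /Mp mulrCA subrX1. Qed.

Lemma D1Qp : D1 * Qp = Mp - 1.
Proof.
rewrite /D1 /Qp mulrCA mulr_sumr.
rewrite (eq_bigr (fun i : 'I_s => 'X^i - 1)); last by move=> i _; rewrite subrX1.
rewrite sumrB mulrBr -/Mp sumr_const card_ord.
by rewrite -polyC_natr -polyCM mulVf ?s_neq0 // polyC1.
Qed.

Lemma SupB_D1Mp : SupB (D1 * Mp) (s%:R^-1 * 2).
Proof.
rewrite D1Mp; apply: SupB_le (SupB_CM (s%:R^-1) (SupB_D (SupB_Xn s) (SupB_N SupB_1))) _.
by rewrite norm_sinv.
Qed.

Lemma W1B_D1Mp : W1B (D1 * Mp) (s%:R^-1 * 2).
Proof.
rewrite D1Mp; apply: W1B_le (W1B_CM (s%:R^-1) (W1B_D (W1B_Xn s) (W1B_N W1B_1))) _.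
by rewrite norm_sinv.
Qed.

Lemma SupB_1M : SupB (1 - Mp) 2.
Proof. by have := SupB_D SupB_1 (SupB_N SupB_Mp). Qed.
Lemma W1B_1M : W1B (1 - Mp) 2.
Proof. by have := W1B_D W1B_1 (W1B_N W1B_Mp). Qed.
Lemma W1B_1pM : W1B (1 + Mp) 2.
Proof. by have := W1B_D W1B_1 W1B_Mp. Qed.
Lemma W1B_1MM : W1B (1 - Mp * Mp) 2.
Proof. have := W1B_D W1B_1 (W1B_N (W1B_M W1B_Mp W1B_Mp)); by rewrite mulr1. Qed.

Definition Pp (B : {poly R}) N := \sum_(i < N) (1 - B) ^+ i.

Lemma decomp B N : 1 = (1 - B) ^+ N + B * Pp B N.
Proof.
have := subrX1 (1 - B) N; rewrite /Pp => h.
have e : 1 - B - 1 = - B by rewrite addrAC subrr add0r.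
rewrite e mulNr in h.
by rewrite -[B * _]opprK -h opprB addrC subrK.
Qed.



Lemma Sup_add f g a b : Sup f a -> Sup g b -> Sup (fun j => f j + g j) (a + b).
Proof. by move=> hf hg j; apply: le_trans (ler_normD _ _) _; apply: lerD. Qed.

Lemma W1_add f g a b : W1 f a -> W1 g b -> W1 (fun j => f j + g j) (a + b).
Proof.
move=> hf hg c n; apply: le_trans (_ : \sum_(t < n) (`|f (c + t%:Z)| + `|g (c + t%:Z)|) <= _).
  by apply: ler_sum => t _; apply: ler_normD.
by rewrite big_split; apply: lerD.
Qed.

Lemma act_split p B N f j :
  act p f j = act (p * (1 - B) ^+ N) f j + act (p * (B * Pp B N)) f j.
Proof. by rewrite -actD -mulrDr -decomp mulr1. Qed.

Definition cP N : R := N%:R * 2 ^+ N.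

Lemma W1B_Pp B N : W1B (1 - B) 2 -> W1B (Pp B N) (cP N).
Proof.
move=> h; apply: (@W1B_sum R N (fun i => (1 - B) ^+ i)) => i hi.
by apply: W1B_le (W1B_exp i h) _; apply: ler_weXn2l; [rewrite ler1n|apply: ltnW].
Qed.

Lemma SupB_Pp B N : SupB (1 - B) 2 -> SupB (Pp B N) (cP N).
Proof.
move=> h; apply: (@SupB_sum R N (fun i => (1 - B) ^+ i)) => i hi.
by apply: SupB_le (SupB_exp i h) _; apply: ler_weXn2l; [rewrite ler1n|apply: ltnW].
Qed.

Lemma L1M N : (1 - Mp) ^+ N = (-1) ^+ N * (Qp ^+ N * D1 ^+ N).
Proof. by rewrite -opprB -D1Qp (exprNn (D1 * Qp)) exprMn [D1 ^+ N * _]mulrC. Qed.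

Lemma L1MM N : (1 - Mp * Mp) ^+ N = (-1) ^+ N * (Qp ^+ N * (1 + Mp) ^+ N * D1 ^+ N).
Proof.
have e : 1 - Mp * Mp = - (D1 * Qp) * (1 + Mp).
  rewrite D1Qp; move: Mp => x; ring.
rewrite e exprMn (exprNn (D1 * Qp)) exprMn.
move: ((-1) ^+ N) (D1 ^+ N) (Qp ^+ N) ((1 + Mp) ^+ N) => a b c d; ring.
Qed.

Lemma core5 n h D A : W1 h D -> W1 (act (D1 ^+ n.+1) h) A ->
  Sup h (s%:R ^+ n * A + s%:R^-1 * cP n.+1 * D).
Proof.
move=> hD hA j; rewrite -(act1 h j) (act_split _ Mp n.+1) !mul1r.
have e : (1 - Mp) ^+ n.+1 = ((-1) ^+ n.+1 * (Qp * Qp ^+ n)) * D1 ^+ n.+1.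
  by rewrite L1M [Qp ^+ n.+1]exprS mulrA.
rewrite e actM.
apply: (Sup_add (f := act ((-1) ^+ n.+1 * (Qp * Qp ^+ n)) (act (D1 ^+ n.+1) h))
   (g := act (Mp * Pp Mp n.+1) h)).
  have := LSB_sign n.+1 (LSB_M LSB_Qp (W1B_exp n W1B_Qp)) hA.
  by rewrite mul1r.
have := LSB_M LSB_Mp (W1B_Pp n.+1 W1B_1M) hD.
by [].
Qed.

Lemma core4 n h D A : W1 h D -> W1 (act (D1 ^+ n.+1) h) A ->
  W1 (act D1 h) (s%:R ^+ n * A + s%:R^-1 * 2 * cP n * D).
Proof.
move=> hD hA; apply: W1_ext (fun j => esym (act_split D1 Mp n h j)) _.
have e : D1 * (1 - Mp) ^+ n = ((-1) ^+ n * Qp ^+ n) * D1 ^+ n.+1.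
  rewrite L1M exprS; move: ((-1) ^+ n) (D1 ^+ n) (Qp ^+ n) => a b c; ring.
have e2 : D1 * (Mp * Pp Mp n) = (D1 * Mp) * Pp Mp n by rewrite mulrA.
have h1 : W1 (act (D1 * (1 - Mp) ^+ n) h) (s%:R ^+ n * A).
  have H := W1B_sign n (W1B_exp n W1B_Qp) hA.
  by apply: (W1_ext _ H) => j; rewrite e -actM.
have h2 : W1 (act (D1 * (Mp * Pp Mp n)) h) (s%:R^-1 * 2 * cP n * D).
  have H := (W1B_M W1B_D1Mp (W1B_Pp n W1B_1M)) _ _ hD.
  by apply: (W1_ext _ H) => j; rewrite e2 actM.
exact: W1_add h1 h2.
Qed.

Lemma core1 k g D A : W1 g D -> W1 (act (D1 ^+ k.+1) g) A ->
  Sup g (s%:R ^+ k * A + s%:R^-1 * cP k.+1 * D).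
Proof.
move=> hD hA j; rewrite -(act1 g j) (act_split _ Mp k.+1) !mul1r.
have e : (1 - Mp) ^+ k.+1 = ((-1) ^+ k.+1 * (Qp * Qp ^+ k)) * D1 ^+ k.+1.
  by rewrite L1M [Qp ^+ k.+1]exprS mulrA.
rewrite e actM.
apply: (Sup_add (f := act ((-1) ^+ k.+1 * (Qp * Qp ^+ k)) (act (D1 ^+ k.+1) g))
   (g := act (Mp * Pp Mp k.+1) g)).
  have := LSB_sign k.+1 (LSB_M LSB_Qp (W1B_exp k W1B_Qp)) hA.
  by rewrite mul1r.
exact: LSB_M LSB_Mp (W1B_Pp k.+1 W1B_1M) _ _ hD.
Qed.

Lemma core2 k h D A : Sup h D -> W1 (act (D1 ^+ k.+2) h) A ->
  Sup (act D1 h) (s%:R ^+ k * A + s%:R^-1 * 2 * cP k.+1 * D).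
Proof.
move=> hD hA j; rewrite (act_split _ Mp k.+1).
have e : D1 * (1 - Mp) ^+ k.+1 = ((-1) ^+ k.+1 * (Qp * Qp ^+ k)) * D1 ^+ k.+2.
  rewrite L1M [Qp ^+ k.+1]exprS [D1 ^+ k.+2]exprS.
  move: ((-1) ^+ k.+1) (D1 ^+ k.+1) (Qp ^+ k) => a b c; ring.
have e2 : D1 * (Mp * Pp Mp k.+1) = (D1 * Mp) * Pp Mp k.+1 by rewrite mulrA.
rewrite e e2 (actM ((-1) ^+ k.+1 * (Qp * Qp ^+ k))) (actM (D1 * Mp)).
apply: (Sup_add (f := act ((-1) ^+ k.+1 * (Qp * Qp ^+ k)) (act (D1 ^+ k.+2) h))
   (g := act (D1 * Mp) (act (Pp Mp k.+1) h))).
  have := LSB_sign k.+1 (LSB_M LSB_Qp (W1B_exp k W1B_Qp)) hA.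
  by rewrite mul1r.
have := SupB_D1Mp (SupB_Pp k.+1 SupB_1M hD).
by rewrite mulrA.
Qed.

Lemma core3 k h D A : W1 h D -> W1 (act (D1 ^+ k.+2) h) A ->
  Sup (act D1 h) (s%:R ^+ k * 2 ^+ k.+1 * A + s%:R^-1 * 2 * (s%:R^-1 * cP k.+1) * D).
Proof.
move=> hD hA j; rewrite (act_split _ (Mp * Mp) k.+1).
have e : D1 * (1 - Mp * Mp) ^+ k.+1 =
   ((-1) ^+ k.+1 * (Qp * (Qp ^+ k * (1 + Mp) ^+ k.+1))) * D1 ^+ k.+2.
  rewrite L1MM [Qp ^+ k.+1]exprS [D1 ^+ k.+2]exprS.
  move: ((-1) ^+ k.+1) (D1 ^+ k.+1) (Qp ^+ k) ((1 + Mp) ^+ k.+1) => a b c d; ring.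
have e2 : D1 * (Mp * Mp * Pp (Mp * Mp) k.+1) = (D1 * Mp) * (Mp * Pp (Mp * Mp) k.+1).
  by rewrite !mulrA.
rewrite e e2 (actM ((-1) ^+ k.+1 * (Qp * (Qp ^+ k * (1 + Mp) ^+ k.+1)))) (actM (D1 * Mp)).
apply: (Sup_add (f := act ((-1) ^+ k.+1 * (Qp * (Qp ^+ k * (1 + Mp) ^+ k.+1))) (act (D1 ^+ k.+2) h))
   (g := act (D1 * Mp) (act (Mp * Pp (Mp * Mp) k.+1) h))).
  have := LSB_sign k.+1 (LSB_M LSB_Qp (W1B_M (W1B_exp k W1B_Qp) (W1B_exp k.+1 W1B_1pM))) hA.
  by rewrite mul1r mulrA.
have := SupB_D1Mp (LSB_M LSB_Mp (W1B_Pp k.+1 W1B_1MM) hD).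
by rewrite !mulrA.
Qed.

End Ops.
Arguments D1 {R}.
Arguments Mp {R} s.
Arguments Qp {R} s.
Arguments cP {R} N.
Arguments Pp {R} B N.

Section Optim.
Variable R : realType.

Lemma conv_pow (Y c D A : R) (a b : nat) :
  (0 < a + b)%N -> 0 <= Y -> 0 <= c -> 0 <= D -> 0 <= A ->
  Y ^+ (a + b) <= c ^+ (a + b) * D ^+ a * A ^+ b ->
  Y <= c * (D `^ (a%:R / (a + b)%:R) * A `^ (b%:R / (a + b)%:R)).
Proof.
move=> hN hY hc hD hA h.
set N := (a + b)%N in hN h *.
have Nr : N%:R * (N%:R : R)^-1 = 1 by rewrite mulfV // pnatr_eq0 -lt0n.
have back : forall x : R, 0 <= x -> (x ^+ N) `^ (N%:R^-1) = x.
  by move=> x hx; rewrite -powR_mulrn // -(powRrM x) Nr powRr1 //.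
have pa : forall (x : R) (k : nat), 0 <= x -> (x ^+ k) `^ (N%:R^-1) = x `^ (k%:R / N%:R).
  by move=> x k hx; rewrite -powR_mulrn // -powRrM.
rewrite -(back Y hY) -(back c hc) -(pa D a hD) -(pa A b hA).
rewrite -powRM ?exprn_ge0 // -powRM ?mulr_ge0 ?exprn_ge0 //.
apply: ge0_ler_powR; rewrite ?nnegrE ?invr_ge0 ?ler0n ?mulr_ge0 ?exprn_ge0 //.
by rewrite mulrA.
Qed.

Lemma small_le0 (X c : R) : (forall s : nat, (0 < s)%N -> X <= c / s%:R) -> X <= 0.
Proof.
move=> h; rewrite leNgt; apply/negP => X0.
have c0 : 0 < c by have := h 1%N isT; rewrite divr1 => /(lt_le_trans X0).
have hb := archi_boundP (ltW (divr_gt0 c0 X0)).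
set n := Num.Def.archi_bound (c / X) in hb.
have hc := h n.+1 isT; rewrite ler_pdivlMr ?ltr0n // in hc.
rewrite ltr_pdivrMr // in hb.
have hn : (n%:R : R) <= n.+1%:R by rewrite ler_nat.
have : X * n%:R <= X * n.+1%:R by rewrite ler_pM2l.
lra.
Qed.

Lemma optim (X D A K : R) (a b : nat) :
  (0 < b)%N -> 0 <= D -> 0 <= A -> 0 <= K ->
  X <= K * D ->
  (forall s : nat, (0 < s)%N -> X <= K * (s%:R ^+ a * A + D / s%:R ^+ b)) ->
  X <= K * (2 ^+ a + 1) * (D `^ (a%:R / (a + b)%:R) * A `^ (b%:R / (a + b)%:R)).
Proof.
move=> hb hD hA hK h1 h2.
set N := (a + b)%N.
have hN : (0 < N)%N by rewrite /N addn_gt0 hb orbT.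
have N0 : (N%:R : R) != 0 by rewrite pnatr_eq0 -lt0n.
set ea := a%:R / N%:R; set eb := b%:R / N%:R.
have eb0 : eb != 0 by rewrite /eb mulf_neq0 ?invr_eq0 // pnatr_eq0 -lt0n.
have eab : ea + eb = 1 by rewrite /ea /eb -mulrDl -natrD mulfV.
set Z := D `^ ea * A `^ eb.
have Z0 : 0 <= Z by rewrite mulr_ge0 ?powR_ge0.
have c1 : 1 <= 2 ^+ a + 1 :> R by rewrite lerDr exprn_ge0.
have [A0|Apos] := eqVneq A 0.
  rewrite /Z A0 powR0 // !mulr0.
  apply: (small_le0 (c := K * D)) => s hs.
  apply: le_trans (h2 s hs) _; rewrite A0 mulr0 add0r mulrA ler_wpM2l ?mulr_ge0 //.
  have sb : (s%:R : R) <= s%:R ^+ b by rewrite ler_eXnr // ler1n.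
  have sb0 : 0 < (s%:R : R) ^+ b by rewrite exprn_gt0 // ltr0n.
  by rewrite lef_pV2 // posrE ltr0n.
have Apos' : 0 < A by rewrite lt_def Apos.
have [DA|AD] := leP D A.
  apply: le_trans h1 _; rewrite -mulrA ler_wpM2l //.
  apply: le_trans (_ : Z <= _); last by rewrite ler_peMl.
  have [->|Dp] := eqVneq D 0; first by [].
  have e : D `^ ea * D `^ eb = D.
    by rewrite -powRD ?eab ?powRr1 ?oner_eq0 ?implybT.
  rewrite -{1}e /Z ler_wpM2l ?powR_ge0 //.
  by apply: ge0_ler_powR; rewrite ?nnegrE ?divr_ge0 ?ler0n // ltW.
have Dpos : 0 < D by apply: lt_trans AD.
pose P n := (0 < n)%N && (D <= n%:R ^+ N * A).
have exP : exists n, P n.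
  have hb' := archi_boundP (ltW (divr_gt0 Dpos Apos')).
  set n := Num.Def.archi_bound (D / A) in hb'.
  exists n.+1; rewrite /P /=; rewrite ltr_pdivrMr // in hb'.
  apply: le_trans (ltW hb') _; rewrite ler_pM2r //.
  apply: le_trans (_ : (n.+1%:R : R) <= _); first by rewrite ler_nat.
  by rewrite ler_eXnr // ler1n.
case: (ex_minnP exP) => s /andP[hs hsP] hmin.
have s1 : (1 < s)%N.
  rewrite ltn_neqAle eq_sym hs andbT; apply/eqP => e; move: hsP.
  by rewrite e expr1n mul1r leNgt AD.
have hprev : (s.-1)%:R ^+ N * A < D.
  rewrite ltNge; apply/negP => hle.
  have := hmin s.-1; rewrite /P hle andbT -ltnS prednK ?(ltnW s1) // s1 => /(_ isT).
  by rewrite -ltnS prednK ?ltnn // ltnW.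
have s2 : (s%:R : R) <= 2 * (s.-1)%:R.
  rewrite -natrM ler_nat -{1}(prednK (ltnW s1)) mul2n -addnn.
  by rewrite -addn1 leq_add2l -ltnS prednK // ltnW.
set S := (s%:R : R) ^+ N.
have S0 : 0 <= S by rewrite exprn_ge0.
have SA : S * A <= 2 ^+ N * D.
  apply: le_trans (_ : (2 * (s.-1)%:R) ^+ N * A <= _).
    by rewrite ler_pM2r // lerXn2r // nnegrE ?ler0n ?mulr_ge0.
  by rewrite exprMn -mulrA ler_pM2l ?exprn_gt0 // ltW.
have Y1 : (s%:R : R) ^+ a * A <= 2 ^+ a * Z.
  apply: conv_pow; rewrite ?mulr_ge0 ?exprn_ge0 ?ler0n //; try exact: ltW.
  have e1 : ((s%:R : R) ^+ a * A) ^+ (a + b) = (S * A) ^+ a * A ^+ b.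
    by rewrite exprMn exprAC [A ^+ (a + b)]exprD mulrA -exprMn.
  have e2 : (2 ^+ a : R) ^+ (a + b) * D ^+ a * A ^+ b = (2 ^+ N * D) ^+ a * A ^+ b.
    by rewrite exprAC -exprMn.
  rewrite e1 e2 ler_pM2r ?exprn_gt0 //.
  by rewrite lerXn2r // nnegrE ?mulr_ge0 ?exprn_ge0 ?ler0n // ltW.
have Y2 : D / (s%:R : R) ^+ b <= 1 * Z.
  apply: conv_pow; rewrite ?divr_ge0 ?exprn_ge0 ?ler0n //; try exact: ltW.
  have Sb : 0 < S ^+ b by rewrite exprn_gt0 // exprn_gt0 // ltr0n ltnW.
  have e1 : (D / (s%:R : R) ^+ b) ^+ (a + b) = D ^+ a * D ^+ b / S ^+ b.
    by rewrite expr_div_n exprAC [D ^+ (a + b)]exprD.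
  rewrite e1 expr1n mul1r ler_pdivrMr // -mulrA ler_pM2l ?exprn_gt0 //.
  by rewrite mulrC -exprMn lerXn2r // nnegrE ?mulr_ge0 ?exprn_ge0 ?ler0n // ltW.
apply: le_trans (h2 s hs) _.
rewrite -mulrA ler_wpM2l // mulrDl mul1r.
by apply: lerD => //; rewrite -[X in _ <= X]mul1r.
Qed.

End Optim.

Section Glue.
Variable R : realType.
Local Open Scope classical_set_scope.
Implicit Types (f g : int -> R).

Definition win (a : int) (n : nat) : set int := [set a + (t:nat)%:Z | t in `I_n].

Lemma win_fin a n : finite_set (win a n).
Proof. exact: finite_image (finite_II n). Qed.

Lemma window_sum f a n :
  (\sum_(i \in win a n) (`|f i|)%:E = (\sum_(t < n) `|f (a + t%:Z)|)%:E)%E.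
Proof.
rewrite /win fsbig_image; last by move=> x y _ _ /= /addrI [].
by rewrite -fsbig_ord sumEFin.
Qed.

Lemma norm1_W1 f x : norm1 f = x%:E -> W1 f x.
Proof.
move=> e a n; rewrite -lee_fin -window_sum -e /norm1.
apply: esum_ge; exists (win a n) => //; split => //; exact: win_fin.
Qed.

Lemma W1_norm1 f b : W1 f b -> (norm1 f <= b%:E)%E.
Proof.
move=> hW; rewrite /norm1 /esum; apply: ge_ereal_sup => _ [X [finX _] <-].
pose M := (\max_(x <- finmap.enum_fset (fset_set X)) absz x)%N.
have XW : X `<=` win (- M%:Z) (M + M).+1.
  move=> x Xx.
  have hx : (absz x <= M)%N.
    apply: (@leq_bigmax_seq _ (finmap.enum_fset (fset_set X)) xpredT (fun x => absz x) x) => //.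
    have hin := in_fset_set finX x.
    have Xx' : x \in X by rewrite inE.
    rewrite Xx' in hin; exact: hin.
  exists (absz (x + M%:Z)%R); rewrite /= ?inE /=; [lia|lia].
apply: (@le_trans _ _ (\sum_(i \in win (- M%:Z) (M + M).+1) (`|f i|)%:E)%E).
  apply: lee_fsum_nneg_subset => //; first exact: win_fin.
  exact/subsetP.
rewrite window_sum lee_fin; exact: hW.
Qed.

Lemma normInf_le f X : (forall j, `|f j| <= X) -> (normInf f <= X%:E)%E.
Proof. by move=> h; apply: ge_ereal_sup => _ [j _ <-]; rewrite lee_fin. Qed.

Lemma normInf_Sup f x : normInf f = x%:E -> Sup f x.
Proof. by move=> e j; rewrite -lee_fin -e; apply: ereal_sup_ubound; exists j. Qed.

Lemma normInf_ge0 f : (0 <= normInf f)%E.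
Proof.
apply: le_trans (_ : (`|f 0|)%:E <= _)%E; first by rewrite lee_fin.
by apply: ereal_sup_ubound; exists 0.
Qed.

Lemma norm1_ge0 f : (0 <= norm1 f)%E.
Proof. by apply: esum_ge0 => i _; rewrite lee_fin. Qed.

End Glue.

Section Distr.
Variable R : realType.
Local Open Scope classical_set_scope.
Implicit Types (f g F G : int -> R).

Lemma Delta_act f : Delta f = act D1 f.
Proof.
apply: funext => j; rewrite /D1 actB actX act1 /Delta //.
Qed.

Lemma DeltaN_act k f : DeltaN k f = act (D1 ^+ k) f.
Proof.
elim: k => [|k IH]; first by apply: funext => j; rewrite expr0 act1.
rewrite /DeltaN iterS -/(DeltaN k f) IH Delta_act.
by apply: funext => j; rewrite exprS actM.
Qed.

Lemma distr_facts F : is_distr_fun F ->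
  (forall j, 0 <= F j <= 1) /\
  exists p : int -> R, (forall i, 0 <= p i) /\
    (forall j, Delta F j = p (j + 1)) /\ ~ (forall i, p i = 0).
Proof.
move=> [p [p0 [p1 hF]]]; split.
  move=> j; have h := hF j.
  apply/andP; split; first by rewrite -lee_fin h; apply: esum_ge0 => i _; rewrite lee_fin; exact: p0.
  rewrite -lee_fin h -p1 (esumID [set i | (i <= j)%R] [set: int]); last first.
    by move=> i _; rewrite lee_fin; exact: p0.
  by rewrite setTI; apply: leeDl; apply: esum_ge0 => i _; rewrite lee_fin; exact: p0.
exists p; split => //; split.
  move=> j; rewrite /Delta.
  have e := hF (j + 1).
  rewrite (esumID [set j + 1]) in e; last by move=> i _; rewrite lee_fin; exact: p0.
  have e1 : [set i | (i <= j + 1)%R] `&` [set j + 1] = [set j + 1].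
    apply/seteqP; split => x /=; first by case.
    by move=> ->; split.
  have e2 : [set i | (i <= j + 1)%R] `&` ~` [set j + 1] = [set i | (i <= j)%R].
    apply/seteqP; split => x /=.
      by case => h1 h2; rewrite -ltzD1 lt_neqAle h1 andbT; apply/eqP.
    move=> h; split; first by rewrite -ltzD1 in h; apply: ltW.
    by move=> e0; move: h; rewrite e0 -ltzD1 ltxx.
  rewrite e1 e2 esum_set1 ?lee_fin // -hF -EFinD in e.
  move: e => [->]; rewrite addrK //.
move=> all0; move: p1; rewrite esum1 //; last by move=> i _; rewrite all0.
by move=> /(congr1 fine) /= /eqP; rewrite eq_sym oner_eq0.
Qed.

Variable m : nat.
Hypothesis hm : (0 < m)%N.

Lemma m_gt0 : (0 : R) < m%:R. Proof. by rewrite ltr0n. Qed.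

Lemma barF_sub F G j : barF m F j - barF m G j = barF m (fun k => F k - G k) j.
Proof. by rewrite /barF -mulrBl sumrB. Qed.

Lemma barF_Delta f j : Delta (barF m f) j = barF m (Delta f) j.
Proof.
rewrite /Delta /barF -mulrBl -sumrB; congr (_ / _); apply: eq_bigr => i _.
by rewrite addrAC.
Qed.

Lemma barF_Sup f D : Sup f D -> Sup (barF m f) D.
Proof.
move=> h j; rewrite /barF normrM [`|_^-1|]ger0_norm ?invr_ge0 ?ler0n //.
rewrite ler_pdivrMr ?m_gt0 //.
apply: le_trans (ler_norm_sum _ _ _) _.
apply: le_trans (_ : \sum_(i < m) D <= _); first by apply: ler_sum => i _; apply: h.
by rewrite sumr_const card_ord mulr_natr.
Qed.

Lemma barF_W1 f D : W1 f D -> W1 (barF m f) D.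
Proof.
move=> h a n.
apply: le_trans (_ : \sum_(t < n) (\sum_(i < m) `|f (a + t%:Z - i%:Z)|) / m%:R <= _).
  apply: ler_sum => t _; rewrite /barF normrM [`|_^-1|]ger0_norm ?invr_ge0 ?ler0n //.
  by rewrite ler_wpM2r ?invr_ge0 ?ler0n // ler_norm_sum.
rewrite -mulr_suml exchange_big /= ler_pdivrMr ?m_gt0 //.
apply: le_trans (_ : \sum_(i < m) D <= _); last by rewrite sumr_const card_ord mulr_natr.
apply: ler_sum => i _.
have -> : \sum_(t < n) `|f (a + t%:Z - i%:Z)| = \sum_(t < n) `|f (a - i%:Z + t%:Z)|.
  by apply: eq_bigr => t _; rewrite addrAC.
exact: h.
Qed.

Lemma barF_01 F : (forall j, 0 <= F j <= 1) -> forall j, 0 <= barF m F j <= 1.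
Proof.
move=> h j; rewrite /barF; apply/andP; split.
  by rewrite divr_ge0 ?ler0n // sumr_ge0 // => i _; case/andP: (h (j - i%:Z)).
rewrite ler_pdivrMr ?m_gt0 // mul1r.
apply: le_trans (_ : \sum_(i < m) (1 : R) <= _); last by rewrite sumr_const card_ord.
by apply: ler_sum => i _; case/andP: (h (j - i%:Z)).
Qed.

End Distr.

Section Assemble.
Variable R : realType.
Implicit Types (f g F G : int -> R).

Lemma glue (L d2 Ap : \bar R) (beta C K2 : R) :
  0 < beta -> beta <= 1 -> 0 < C ->
  (0 <= d2)%E -> (0 < Ap)%E ->
  (forall d, d2 = d%:E -> (L <= (K2 * d)%:E)%E) ->
  (beta = 1 -> forall A, Ap = A%:E -> (L <= (C * A)%:E)%E) ->
  (forall d A, d2 = d%:E -> Ap = A%:E ->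
     (L <= (C * (d `^ (1 - beta) * A `^ beta))%:E)%E) ->
  (L <= C%:E * poweR d2 (1 - beta) * poweR Ap beta)%E.
Proof.
move=> b0 b1 C0 d20 Ap0 hT h1 hM.
have bne : beta != 0 by rewrite gt_eqF.
have CE : (0 < C%:E)%E by rewrite lte_fin.
case: Ap Ap0 h1 hM => [A| |] Ap0 h1 hM //.
  have A0 : 0 < A by rewrite -lte_fin.
  case: d2 d20 hT h1 hM => [d| |] d20 hT h1 hM //.
    by rewrite !poweR_EFin -!EFinM -mulrA; apply: hM.
  have [e1|ne1] := eqVneq beta 1.
    rewrite e1 subrr poweRe0 mule1 poweR_EFin (powRr1 (ltW A0)).
    by rewrite -EFinM; apply: h1.
  rewrite poweRyr ?subr_eq0 1?eq_sym // gt0_muley // poweR_EFin gt0_mulye ?leey //.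
  by rewrite lte_fin powR_gt0.
rewrite poweRyr //.
have := poweR_ge0 d2 (1 - beta); rewrite le_eqVlt => /orP[/eqP P0|Ppos].
  have := P0; move/esym/eqP; rewrite poweR_eq0 // => /andP[/eqP d0 _].
  rewrite -P0 mule0 mul0e.
  by have := hT 0 d0; rewrite mulr0.
by rewrite gt0_muley ?leey // mule_gt0.
Qed.

Lemma A_split (u v : int -> R) (A : R) : (norm1 u + norm1 v = A%:E)%E -> W1 (fun j => u j - v j) A.
Proof.
have u0 := norm1_ge0 u; have v0 := norm1_ge0 v.
case Eu: (norm1 u) u0 => [x| |] u0 //; case Ev: (norm1 v) v0 => [y| |] v0 //.
move=> [<-] a n.
have hu := norm1_W1 Eu a n; have hv := norm1_W1 Ev a n.
apply: le_trans (_ : \sum_(t < n) (`|u (a + t%:Z)| + `|v (a + t%:Z)|) <= _).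
  by apply: ler_sum => t _; apply: ler_normB.
by rewrite big_split /=; apply: lerD.
Qed.

Lemma Apos F l m : is_distr_fun F -> (0 < l)%N -> (0 < m)%N ->
  norm1 (DeltaN l.+1 (barF m F)) != 0%E.
Proof.
move=> hF hl hm; apply/eqP => e0.
have [h01 [p [p0 [hD hp]]]] := distr_facts hF.
have hW : W1 (act (D1 ^+ (l.-1).+2) (barF m F)) 0.
  by rewrite -DeltaN_act prednK //; apply: norm1_W1.
have hS : Sup (barF m F) 1.
  move=> j; have /andP[a b] := barF_01 hm h01 j; by rewrite ger0_norm.
have hz : forall j, Delta (barF m F) j = 0.
  move=> j; apply/eqP; rewrite -normr_le0.
  apply: (small_le0 (c := 2 * cP (l.-1).+1)) => s hs.
  have H := @core2 R s hs (l.-1) (barF m F) 1 0 hS hW j.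
  rewrite -Delta_act in H; apply: le_trans H _.
  rewrite mulr0 add0r mulr1 le_eqVlt; apply/orP; left; apply/eqP; ring.
apply: hp => i.
have := hz (i - 1); rewrite barF_Delta /barF => /eqP.
rewrite mulf_eq0 invr_eq0 pnatr_eq0 (negPf (lt0n_neq0 hm)) orbF => /eqP hs.
have nn : forall k : 'I_m, true -> 0 <= Delta F (i - 1 - (k : nat)%:Z) by move=> k _; rewrite hD.
have := @psumr_eq0P _ _ _ _ nn hs (Ordinal hm) isT.
by rewrite /= subr0 hD subrK.
Qed.

Lemma assemble (d1 d2 : (int -> R) -> (int -> R) -> \bar R) (beta : R) (l m : nat) (C K2 : R) :
  (0 < l)%N -> (0 < m)%N -> 0 < beta -> beta <= 1 -> 0 < C ->
  (forall F G, (0 <= d2 F G)%E) ->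
  (forall F G, is_distr_fun F -> is_distr_fun G ->
     (forall d, d2 F G = d%:E -> (d1 (barF m F) (barF m G) <= (K2 * d)%:E)%E) /\
     (beta = 1 -> forall A,
        (norm1 (DeltaN l.+1 (barF m F)) + norm1 (DeltaN l.+1 (barF m G)) = A%:E)%E ->
        (d1 (barF m F) (barF m G) <= (C * A)%:E)%E) /\
     (forall d A, d2 F G = d%:E ->
        (norm1 (DeltaN l.+1 (barF m F)) + norm1 (DeltaN l.+1 (barF m G)) = A%:E)%E ->
        (d1 (barF m F) (barF m G) <= (C * (d `^ (1 - beta) * A `^ beta))%:E)%E)) ->
  smoothing_bound d1 d2 beta l m.
Proof.
move=> hl hm b0 b1 C0 d20 H; exists C; split => // F G hF hG.
have [hT [h1 hM]] := H F G hF hG.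
apply: (glue (K2 := K2)) => //.
have u0 := norm1_ge0 (DeltaN l.+1 (barF m F)).
have v0 := norm1_ge0 (DeltaN l.+1 (barF m G)).
have upos : (0 < norm1 (DeltaN l.+1 (barF m F)))%E.
  by rewrite lt_def u0 andbT; apply: Apos.
by apply: lt_le_trans upos _; apply: leeDl.
Qed.

End Assemble.

Section Cases.
Variable R : realType.
Variables (l m : nat).
Hypotheses (hl : (0 < l)%N) (hm : (0 < m)%N).
Implicit Types (f g F G : int -> R).

Definition hf F G : int -> R := fun j => barF m F j - barF m G j.

Definition Ap F G : \bar R :=
  (norm1 (DeltaN l.+1 (barF m F)) + norm1 (DeltaN l.+1 (barF m G)))%E.

Lemma ctx F G : is_distr_fun F -> is_distr_fun G ->
  Sup (hf F G) 1 /\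
  (forall A, (norm1 (DeltaN l.+1 (barF m F)) + norm1 (DeltaN l.+1 (barF m G)) = A%:E)%E ->
     W1 (act (D1 ^+ l.+1) (hf F G)) A) /\
  (forall j, Delta (barF m F) j - Delta (barF m G) j = act D1 (hf F G) j).
Proof.
move=> hF hG; have [hF01 _] := distr_facts hF; have [hG01 _] := distr_facts hG.
split; [|split].
- move=> j; rewrite /hf; have /andP[a1 a2] := barF_01 hm hF01 j.
  have /andP[b1 b2] := barF_01 hm hG01 j.
  rewrite ler_norml; apply/andP; split; lra.
- move=> A eA; have H := A_split eA.
  apply: (W1_ext _ H) => j; rewrite !DeltaN_act /hf act_fB //.
- by move=> j; rewrite !Delta_act /hf act_fB.
Qed.

Definition Kc : R := 2 ^+ l + 2 ^+ l.+1 + 2 * (cP l + cP l.+1) + 2.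

Lemma cP_ge0 N : 0 <= cP N :> R.
Proof. by rewrite /cP mulr_ge0 ?ler0n ?exprn_ge0. Qed.

Lemma Kprops : [/\ 2 <= Kc, 1 <= Kc, 2 ^+ l <= Kc, 2 * cP l <= Kc & 2 * cP l.+1 <= Kc].
Proof.
have h1 := cP_ge0 l; have h2 := cP_ge0 l.+1.
have h3 : 0 <= 2 ^+ l :> R by rewrite exprn_ge0.
have h4 : 0 <= 2 ^+ l.+1 :> R by rewrite exprn_ge0.
rewrite /Kc; split; lra.
Qed.

Lemma Kform (X P Q A d K S1 S2 : R) : 0 <= A -> 0 <= d ->
  X <= P * A + Q * d -> P <= K * S1 -> Q <= K * S2 -> X <= K * (S1 * A + d * S2).
Proof.
move=> hA hd hX hP hQ; apply: le_trans hX _.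
have h1 : P * A <= K * S1 * A by rewrite ler_wpM2r.
have h2 : Q * d <= K * S2 * d by rewrite ler_wpM2r.
apply: le_trans (lerD h1 h2) _.
by rewrite mulrDr -!mulrA [S2 * d]mulrC.
Qed.

Lemma optimE (X D A K : R) (a b : nat) beta :
  (0 < b)%N -> 0 <= D -> 0 <= A -> 0 <= K ->
  X <= K * D ->
  (forall s : nat, (0 < s)%N -> X <= K * (s%:R ^+ a * A + D / s%:R ^+ b)) ->
  beta = b%:R / (a + b)%:R ->
  X <= K * (2 ^+ a + 1) * (D `^ (1 - beta) * A `^ beta).
Proof.
move=> hb hD hA hK h1 h2 eb.
have -> : 1 - beta = a%:R / (a + b)%:R.
  have N0 : ((a + b)%:R : R) != 0 by rewrite pnatr_eq0 addn_eq0 negb_and (lt0n_neq0 hb) orbT.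
  by rewrite eb natrD; field; rewrite -natrD.
by rewrite eb; apply: optim.
Qed.

Lemma beta1 (h : int -> R) (A : R) : Sup h 1 -> W1 (act (D1 ^+ 2) h) A -> forall j, `|act D1 h j| <= A.
Proof.
move=> hS hW j; rewrite -subr_le0.
apply: (small_le0 (c := 2 * cP 1)) => s hs.
have H := @core2 R s hs 0 h 1 A hS hW j.
rewrite expr0 mul1r mulr1 in H.
have e : s%:R^-1 * 2 * cP 1 = 2 * cP 1 / s%:R :> R by ring.
lra.
Qed.

Lemma C_ge1 a : 1 <= Kc * (2 ^+ a + 1).
Proof.
have [_ K1 _ _ _] := Kprops.
have : 1 <= 2 ^+ a + 1 :> R by rewrite lerDr exprn_ge0.
move=> h; apply: le_trans (_ : 1 * 1 <= _); first by rewrite mul1r.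
by apply: ler_pM.
Qed.

Lemma case2 : smoothing_bound (@dloc R) (@dK R) (l%:R^-1) l m.
Proof.
set k := l.-1; have lk : l = k.+1 by rewrite prednK.
have [K2 K1 K2l KcP KcP1] := Kprops.
have K0 : 0 <= Kc by apply: le_trans K1; rewrite ler01.
apply: (assemble (C := Kc * (2 ^+ k + 1)) (K2 := 2) hl hm).
- by rewrite invr_gt0 ltr0n.
- by rewrite invf_le1 ?ltr0n // ler1n.
- by apply: lt_le_trans (C_ge1 k).
- by move=> F G; apply: normInf_ge0.
move=> F G hF hG; have [hS [hW hD]] := ctx hF hG.
have hSd : forall d, dK F G = d%:E -> Sup (hf F G) d.
  move=> d e; apply: (Sup_ext (fun j => esym (barF_sub _ _ _ j))).
  exact: barF_Sup (normInf_Sup e).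
split; [|split].
- move=> d e; apply: normInf_le => j; rewrite hD.
  by have := SupB_D1 (hSd d e) j.
- move=> e1 A eA; have l1 : l = 1%N.
    by move/eqP: e1; rewrite invr_eq1 pnatr_eq1 => /eqP.
  have hWA := hW A eA; rewrite l1 in hWA.
  have A0 := W1_ge0 hWA.
  apply: normInf_le => j; rewrite hD; apply: le_trans (beta1 hS hWA j) _.
  by rewrite ler_peMl // C_ge1.
move=> d A ed eA.
have hWA := hW A eA; rewrite lk in hWA.
have A0 := W1_ge0 hWA; have hSdd := hSd d ed; have d0 := Sup_ge0 hSdd.
apply: normInf_le => j; rewrite hD.
apply: (optimE (b := 1)) => //.
- apply: le_trans (SupB_D1 hSdd j) _; by rewrite ler_wpM2r.
- move=> s hs; apply: (Kform A0 d0 (@core2 R s hs k _ d A hSdd hWA j)).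
    by rewrite ler_peMl // exprn_ge0.
  have e : s%:R^-1 * 2 * cP k.+1 = 2 * cP k.+1 * s%:R^-1 :> R by ring.
  rewrite e expr1; apply: ler_wpM2r; first by rewrite invr_ge0 ler0n.
  by rewrite -lk.
- by rewrite lk addn1 mul1r.
Qed.



Lemma hW_shift F G A : W1 (act (D1 ^+ l.+1) (hf F G)) A ->
  W1 (act (D1 ^+ l) (act D1 (hf F G))) A.
Proof. by move=> H; apply: (W1_ext _ H) => j; rewrite -actM -exprSr. Qed.

Lemma dTV_W1 F G d : is_distr_fun F -> is_distr_fun G ->
  dTV F G = d%:E -> W1 (act D1 (hf F G)) (2 * d).
Proof.
move=> hF hG; have [_ [_ hD]] := ctx hF hG.
rewrite /dTV; have := norm1_ge0 (fun j => Delta F j - Delta G j).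
case E: (norm1 _) => [x| |] x0 //.
  rewrite -EFinM => -[<-].
  have hx := norm1_W1 E.
  have e : 2 * (2^-1 * x) = x :> R by rewrite mulrA divff ?mul1r // pnatr_eq0.
  rewrite e; apply: (W1_ext _ (barF_W1 hm hx)) => j.
  by rewrite -hD !barF_Delta barF_sub.
by rewrite gt0_muley // lte_fin invr_gt0 ltr0n.
Qed.

Lemma dTV_ge0 F G : (0 <= dTV F G)%E.
Proof. by rewrite /dTV mule_ge0 ?norm1_ge0 // lee_fin invr_ge0 ler0n. Qed.

Lemma hW_dW F G d : dW F G = d%:E -> W1 (hf F G) d.
Proof.
move=> e; apply: (W1_ext (fun j => esym (barF_sub _ _ _ j))).
exact: barF_W1 (norm1_W1 e).
Qed.

Lemma case1 : smoothing_bound (@dloc R) (@dTV R) (l%:R^-1) l m.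
Proof.
set k := l.-1; have lk : l = k.+1 by rewrite prednK.
have [K2 K1 K2l KcP KcP1] := Kprops.
have K0 : 0 <= Kc by apply: le_trans K1; rewrite ler01.
apply: (assemble (C := Kc * (2 ^+ k + 1)) (K2 := 2) hl hm).
- by rewrite invr_gt0 ltr0n.
- by rewrite invf_le1 ?ltr0n // ler1n.
- by apply: lt_le_trans (C_ge1 k).
- by move=> F G; apply: dTV_ge0.
move=> F G hF hG; have [hS [hW hD]] := ctx hF hG.
split; [|split].
- move=> d e; apply: normInf_le => j; rewrite hD.
  exact: (W1_Sup (dTV_W1 hF hG e)).
- move=> e1 A eA; have l1 : l = 1%N.
    by move/eqP: e1; rewrite invr_eq1 pnatr_eq1 => /eqP.
  have hWA := hW A eA; rewrite l1 in hWA.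
  have A0 := W1_ge0 hWA.
  apply: normInf_le => j; rewrite hD; apply: le_trans (beta1 hS hWA j) _.
  by rewrite ler_peMl // C_ge1.
move=> d A ed eA.
have hWA := hW_shift (hW A eA); rewrite lk in hWA.
have A0 := W1_ge0 hWA; have hg := dTV_W1 hF hG ed.
have d0 : 0 <= d by have := W1_ge0 hg; rewrite pmulr_rge0.
apply: normInf_le => j; rewrite hD.
apply: (optimE (b := 1)) => //.
- apply: le_trans (W1_Sup hg j) _; by rewrite ler_wpM2r.
- move=> s hs; have H := @core1 R s hs k _ _ A hg hWA j.
  rewrite mulrA in H.
  apply: (Kform A0 d0 H); first by rewrite ler_peMl // exprn_ge0.
  have e : s%:R^-1 * cP k.+1 * 2 = 2 * cP k.+1 * s%:R^-1 :> R by ring.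
  rewrite e expr1; apply: ler_wpM2r; first by rewrite invr_ge0 ler0n.
  by rewrite -lk.
- by rewrite lk addn1 mul1r.
Qed.

Lemma case3 : smoothing_bound (@dloc R) (@dW R) (2 / l.+1%:R) l m.
Proof.
set k := l.-1; have lk : l = k.+1 by rewrite prednK.
have [K2 K1 K2l KcP KcP1] := Kprops.
have K0 : 0 <= Kc by apply: le_trans K1; rewrite ler01.
apply: (assemble (C := Kc * (2 ^+ k + 1)) (K2 := 2) hl hm).
- by apply: divr_gt0; rewrite ltr0n.
- by rewrite ler_pdivrMr ?ltr0n // mul1r ler_nat ltnS.
- by apply: lt_le_trans (C_ge1 k).
- by move=> F G; apply: norm1_ge0.
move=> F G hF hG; have [hS [hW hD]] := ctx hF hG.
split; [|split].
- move=> d e; apply: normInf_le => j; rewrite hD.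
  exact: (SupB_D1 (W1_Sup (hW_dW e))).
- move=> e1 A eA; have l1 : l = 1%N.
    have := congr1 (fun x => x * l.+1%:R) e1; rewrite mul1r divfK ?pnatr_eq0 //.
    by move/eqP; rewrite (eqr_nat R 2 l.+1) eqSS => /eqP.
  have hWA := hW A eA; rewrite l1 in hWA.
  have A0 := W1_ge0 hWA.
  apply: normInf_le => j; rewrite hD; apply: le_trans (beta1 hS hWA j) _.
  by rewrite ler_peMl // C_ge1.
move=> d A ed eA.
have hWA := hW A eA; rewrite lk in hWA.
have A0 := W1_ge0 hWA; have hWd := hW_dW ed; have d0 := W1_ge0 hWd.
apply: normInf_le => j; rewrite hD.
apply: (optimE (b := 2)) => //.
- apply: le_trans (SupB_D1 (W1_Sup hWd) j) _; by rewrite ler_wpM2r.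
- move=> s hs; have H := @core3 R s hs k _ _ A hWd hWA j.
  apply: (Kform A0 d0 H).
    rewrite mulrC ler_wpM2r ?exprn_ge0 //.
    by rewrite -lk.
  have e : s%:R^-1 * 2 * (s%:R^-1 * cP k.+1) = 2 * cP k.+1 * (s%:R ^+ 2)^-1 :> R.
    by rewrite -exprVn expr2; ring.
  rewrite e; apply: ler_wpM2r; first by rewrite invr_ge0 exprn_ge0 ?ler0n.
  by rewrite -lk.
- by rewrite lk addn2.
Qed.

Lemma case4 : smoothing_bound (@dTV R) (@dW R) (l.+1%:R^-1) l m.
Proof.
have [K2 K1 K2l KcP KcP1] := Kprops.
have K0 : 0 <= Kc by apply: le_trans K1; rewrite ler01.
apply: (assemble (C := Kc * (2 ^+ l + 1)) (K2 := 1) hl hm).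
- by rewrite invr_gt0 ltr0n.
- by rewrite invf_le1 ?ltr0n // ler1n.
- by apply: lt_le_trans (C_ge1 l).
- by move=> F G; apply: norm1_ge0.
move=> F G hF hG; have [hS [hW hD]] := ctx hF hG.
have fin : forall Y, 0 <= Y -> W1 (act D1 (hf F G)) (2 * Y) ->
    (dTV (barF m F) (barF m G) <= Y%:E)%E.
  move=> Y Y0 HW; rewrite /dTV.
  have HW' : W1 (fun j => Delta (barF m F) j - Delta (barF m G) j) (2 * Y).
    by apply: (W1_ext _ HW) => j; rewrite hD.
  apply: le_trans (_ : (2^-1)%:E * (2 * Y)%:E <= _)%E.
    apply: lee_pmul; rewrite ?lee_fin ?invr_ge0 ?ler0n ?norm1_ge0 //.
    exact: W1_norm1.
  by rewrite -EFinM mulrA mulVf ?mul1r // pnatr_eq0.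
split; [|split].
- move=> d e; have hWd := hW_dW e; have d0 := W1_ge0 hWd.
  apply: fin; first by rewrite mul1r.
  by rewrite mul1r; apply: W1B_D1.
- move=> e1; exfalso; move/eqP: e1; rewrite invr_eq1 pnatr_eq1.
  by case: l hl.
move=> d A ed eA.
have hWA := hW A eA.
have A0 := W1_ge0 hWA; have hWd := hW_dW ed; have d0 := W1_ge0 hWd.
have Z0 : 0 <= Kc * (2 ^+ l + 1) * (d `^ (1 - l.+1%:R^-1) * A `^ l.+1%:R^-1).
  apply: mulr_ge0; last by apply: mulr_ge0; apply: powR_ge0.
  have h2l : 0 <= 2 ^+ l + 1 :> R by rewrite addr_ge0 ?exprn_ge0.
  exact: mulr_ge0.
apply: fin => //.
apply: W1_le (_ : W1 _ (Kc * (2 ^+ l + 1) * (d `^ (1 - l.+1%:R^-1) * A `^ l.+1%:R^-1))) _.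
  move=> a n; apply: (optimE (b := 1)) => //.
  - apply: le_trans (W1B_D1 hWd a n) _; by rewrite ler_wpM2r.
  - move=> s hs; have H := @core4 R s hs l _ _ A hWd hWA a n.
    apply: (Kform A0 d0 H); first by rewrite ler_peMl // exprn_ge0.
    have e : s%:R^-1 * 2 * cP l = 2 * cP l * s%:R^-1 :> R by ring.
    rewrite e expr1; apply: ler_wpM2r => //; by rewrite invr_ge0 ler0n.
  - by rewrite addn1 mul1r.
by rewrite ler_peMl // ler1n.
Qed.

Lemma case5 : smoothing_bound (@dK R) (@dW R) (l.+1%:R^-1) l m.
Proof.
have [K2 K1 K2l KcP KcP1] := Kprops.
have K0 : 0 <= Kc by apply: le_trans K1; rewrite ler01.
have cP0 := cP_ge0 l.+1.
apply: (assemble (C := Kc * (2 ^+ l + 1)) (K2 := 1) hl hm).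
- by rewrite invr_gt0 ltr0n.
- by rewrite invf_le1 ?ltr0n // ler1n.
- by apply: lt_le_trans (C_ge1 l).
- by move=> F G; apply: norm1_ge0.
move=> F G hF hG; have [hS [hW hD]] := ctx hF hG.
split; [|split].
- move=> d e; apply: normInf_le => j; rewrite mul1r.
  exact: (W1_Sup (hW_dW e)).
- move=> e1; exfalso; move/eqP: e1; rewrite invr_eq1 pnatr_eq1.
  by case: l hl.
move=> d A ed eA.
have hWA := hW A eA.
have A0 := W1_ge0 hWA; have hWd := hW_dW ed; have d0 := W1_ge0 hWd.
apply: normInf_le => j.
apply: (optimE (X := `|hf F G j|) (b := 1)) => //.
- apply: le_trans (W1_Sup hWd j) _; by rewrite ler_peMl.
- move=> s hs; have H := @core5 R s hs l _ _ A hWd hWA j.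
  apply: (Kform A0 d0 H); first by rewrite ler_peMl // exprn_ge0.
  rewrite expr1 mulrC; apply: ler_wpM2r; first by rewrite invr_ge0 ler0n.
  lra.
- by rewrite addn1 mul1r.
Qed.

End Cases.

Theorem theorem2 (R : realType) (l m : nat) (hl : (1 <= l)%N) (hm : (1 <= m)%N) :
  [/\ smoothing_bound (@dloc R) (@dTV R) (l%:R^-1) l m,
      smoothing_bound (@dloc R) (@dK R) (l%:R^-1) l m,
      smoothing_bound (@dloc R) (@dW R) (2 / l.+1%:R) l m,
      smoothing_bound (@dTV R) (@dW R) (l.+1%:R^-1) l m &
      smoothing_bound (@dK R) (@dW R) (l.+1%:R^-1) l m].
Proof.
split.
- exact: case1.
- exact: case2.
- exact: case3.
- exact: case4.
- exact: case5.
Qed.
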